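(* Let $\mathcal F$ be a family of configurations and $\mathcal P$ a boolean predicate over $\mathcal F$. Suppose there is a configuration $G_s\in\mathcal F$ such that (1) $\mathcal P(G_s)=\text{true}$; (2) $G_s$ contains $r$ directed edges $e_1,\dots,e_r$ whose $t$-neighborhoods $N_t(e_1,G_s),\dots,N_t(e_r,G_s)$ are pairwise disjoint and contain $q$ vertices each, and there exist $r$ state-preserving isomorphisms $\sigma_i:V(N_t(e_1,G_s))\to V(N_t(e_i,G_s))$, $i=1,\dots,r$, with $\sigma_i(H(e_1))=H(e_i)$ and $\sigma_i(T(e_1))=T(e_i)$; and (3) for every $i\ne j$ there is a connected component $H_s$ of $\mathrm{Cross}(e_i,e_j,G_s)$ with $\mathcal P(H_s)=\text{false}$. Then the label size of any $t$-PLS for $(\mathcal F,\mathcal P)$ is $\Omega((\log r)/q)$.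
   Context: A configuration $G_s$ consists of a graph $G=(V,E)$ together with a state assignment $\varphi:V\to S$ (states may include unique vertex identifiers). A $t$-round proof-labeling scheme ($t$-PLS) for $(\mathcal F,\mathcal P)$ consists of a prover assigning a bit string (label) to every vertex of each configuration, and a deterministic distributed verifier running $t$ synchronous rounds (in each round every vertex receives messages from all neighbors, computes, and sends messages to neighbors), after which each vertex outputs true or false; the scheme must be complete (configurations satisfying $\mathcal P$ are accepted, i.e. all vertices output true, with the prover's labels) and sound (configurations not satisfying $\mathcal P$ are rejected, i.e. some vertex outputs false, under every labeling). The label size is the maximum length of a label assigned by the prover on configurations satisfying $\mathcal P$. For a directed edge $e$, $H(e)$ is its head and $T(e)$ its tail. $\mathrm{Cross}(e_1,e_2,G)$ is the graph obtained from $G$ by replacing $e_1,e_2$ with $(T(e_1),H(e_2))$ and $(T(e_2),H(e_1))$. For an edge $e=(u,v)$, $N_k(e,G)$ is the subgraph induced on the vertices $w$ with $\min(\mathrm{dist}(w,u),\mathrm{dist}(w,v))\le k$. *)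

(* Defs.v *)
From mathcomp Require Import all_boot.
Set Implicit Arguments. Unset Strict Implicit. Unset Printing Implicit Defensive.

Record config (S : Type) := Config {
  vtx : finType;
  adj : rel vtx;
  st  : vtx -> S }.

Section Defs.
Variable S : Type.

Definition simple_graph (G : config S) :=
  symmetric (@adj S G) /\ irreflexive (@adj S G).

Fixpoint within (T : finType) (a : rel T) (k : nat) (x y : T) : bool :=
  match k with
  | 0 => x == y
  | k'.+1 => within a k' x y || [exists z, a x z && within a k' z y]
  end.

Definition Tl (T : Type) (e : T * T) := e.1.
Definition Hd (T : Type) (e : T * T) := e.2.

Definition nbhd (G : config S) (k : nat) (e : vtx G * vtx G) : {set vtx G} :=
  [set w | within (@adj S G) k w (Tl e) || within (@adj S G) k w (Hd e)].

Definition state_iso (G : config S) (A B : {set vtx G}) (f : vtx G -> vtx G) :=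
  [/\ {in A, forall x, f x \in B},
      {in A &, injective f},
      (forall y, y \in B -> exists2 x, x \in A & f x = y),
      {in A &, forall x y, adj (f x) (f y) = adj x y} &
      {in A, forall x, st (f x) = st x}].

Definition same_edge (T : eqType) (e : T * T) (x y : T) :=
  ((x == Tl e) && (y == Hd e)) || ((x == Hd e) && (y == Tl e)).

(* Cross(e1,e2,G): replace e1, e2 by (T e1, H e2) and (T e2, H e1) *)
Definition cross_adj (T : eqType) (a : rel T) (e1 e2 : T * T) : rel T :=
  fun x y =>
    [|| a x y && ~~ same_edge e1 x y && ~~ same_edge e2 x y,
        same_edge (Tl e1, Hd e2) x y
      | same_edge (Tl e2, Hd e1) x y].

Definition cross (G : config S) (e1 e2 : vtx G * vtx G) : config S :=
  @Config S (vtx G) (cross_adj (@adj S G) e1 e2) (@st S G).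

Definition induced (G : config S) (A : {set vtx G}) : config S :=
  @Config S {x : vtx G | x \in A}
    (fun a b => adj (val a) (val b)) (fun a => st (val a)).

Definition component (G : config S) (x : vtx G) : config S :=
  induced [set y | connect (@adj S G) x y].

(* A deterministic synchronous verifier (full-information, w.l.o.g. each
   vertex sends its whole memory to all neighbours; a vertex receives the
   multiset of its neighbours' messages, as a sequence on which the step
   function must not depend on the order). *)
Record verifier := Verifier {
  vmem : eqType;
  vinit : S -> bitseq -> vmem;
  vstep : vmem -> seq vmem -> vmem;
  vout : vmem -> bool;
  vstep_perm : forall m s1 s2, perm_eq s1 s2 -> vstep m s1 = vstep m s2 }.

Fixpoint run (ver : verifier) (G : config S) (L : vtx G -> bitseq)
    (k : nat) : vtx G -> vmem ver :=
  match k with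
  | 0 => fun x => vinit ver (st x) (L x)
  | k'.+1 => fun x =>
      vstep (run ver L k' x) [seq run ver L k' y | y <- enum (@adj S G x)]
  end.

Definition accepts (ver : verifier) (t : nat) (G : config S)
    (L : vtx G -> bitseq) := forall x, vout (run ver L t x).

Definition prover := forall G : config S, vtx G -> bitseq.

Definition is_PLS (F : config S -> Prop) (P : config S -> bool) (t : nat)
    (prv : prover) (ver : verifier) :=
  (forall G, F G -> P G -> accepts ver t (prv G)) /\
  (forall G, F G -> P G = false -> forall L : vtx G -> bitseq, ~ accepts ver t L).

Definition label_size_le (F : config S -> Prop) (P : config S -> bool)
    (prv : prover) (l : nat) :=
  forall G, F G -> P G -> forall x, size (prv G x) <= l.

End Defs.

(* Main.v *)
Require Import Defs.
From mathcomp Require Import all_boot.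
From mathcomp Require Import zify.
Set Implicit Arguments. Unset Strict Implicit. Unset Printing Implicit Defensive.

Fixpoint code (s : bitseq) : nat := if s is b :: s' then 2 * code s' + b + 1 else 0.

Lemma code_inj : injective code.
Proof.
elim=> [|b1 s1 IH] [|b2 s2] //=; try lia.
move=> h; have hb : b1 = b2 by case: b1 b2 h => [] [] //=; lia.
subst; congr (_ :: _); apply: IH; lia.
Qed.

Lemma code_bound s : code s + 2 <= 2 ^ (size s).+1.
Proof.
elim: s => [|b s IH] //=; rewrite expnS.
move: (2 ^ _) IH => P IH; case: b => /=; lia.
Qed.

Lemma code_small l s : size s <= l -> code s < 2 ^ (2 * l).
Proof.
case: l => [|l] hs.
  by move: hs; rewrite leqn0 => /nilP ->.
have h1 := code_bound s.
have h2 : 2 ^ (size s).+1 <= 2 ^ (2 * l.+1) by rewrite leq_exp2l //; lia.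
move: (2 ^ _) (2 ^ (2 * _)) h1 h2 => X Y; lia.
Qed.

Fixpoint num (M : nat) (s : seq nat) : nat := if s is c :: s' then num M s' * M + c else 0.

Lemma num_inj M s1 s2 : 0 < M -> size s1 = size s2 ->
  all (fun c => c < M) s1 -> all (fun c => c < M) s2 -> num M s1 = num M s2 -> s1 = s2.
Proof.
move=> M0; elim: s1 s2 => [|c1 s1 IH] [|c2 s2] //= [hs] /andP[h1 a1] /andP[h2 a2] h.
have hc : c1 = c2.
  by rewrite -(modn_small h1) -(modn_small h2) -(modnMDl (num M s1) c1) h modnMDl.
rewrite hc in h *; congr (_ :: _); apply: IH => //.
by move/eqP: h; rewrite eqn_add2r eqn_mul2r (gtn_eqF M0) /= => /eqP.
Qed.

Lemma num_lt M s : all (fun c => c < M) s -> num M s < M ^ size s.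
Proof.
elim: s => [|c s IH] //= /andP[hc /IH h]; rewrite expnS.
move: (M ^ size s) h => P h; nia.
Qed.

Lemma withinS (T : finType) (a : rel T) k x y : within a k x y -> within a k.+1 x y.
Proof. by move=> h /=; rewrite h. Qed.

Lemma within_mono (T : finType) (a : rel T) k m x y : k <= m -> within a k x y -> within a m x y.
Proof.
move=> /subnK <-; elim: (m - k) => [|d IH] h //.
by rewrite addSn /= IH.
Qed.

Lemma within_refl (T : finType) (a : rel T) m x : within a m x x.
Proof. elim: m => [|m IH] /=; [exact: eqxx | by rewrite IH]. Qed.

Lemma within_step (T : finType) (a : rel T) k y z p :
  a y z -> within a k z p -> within a k.+1 y p.
Proof. move=> h1 h2 /=; apply/orP; right; apply/existsP; exists z; by rewrite h1. Qed.

Definition pt (T : Type) (b : bool) (e : T * T) := if b then Tl e else Hd e.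

Lemma nbhd_in S (G : config S) t (e : vtx G * vtx G) b m z :
  m <= t -> within (@adj S G) m z (pt b e) -> z \in nbhd t e.
Proof.
move=> hm hw; have := within_mono hm hw; rewrite inE.
by case: b {hw} => /= ->; rewrite ?orbT.
Qed.

Lemma iso_within S (G : config S) (A : {set vtx G}) (f : vtx G -> vtx G) (t : nat) (a b : vtx G) :
  (forall m z, m <= t -> within (@adj S G) m z a -> z \in A) ->
  f a = b ->
  {in A &, forall x y, adj (f x) (f y) = adj x y} ->
  forall m x, m <= t -> within (@adj S G) m x a -> within (@adj S G) m (f x) b.
Proof.
move=> HA fab Hadj; elim=> [|m IH] x Hm /=.
  by move/eqP->; rewrite fab.
case/orP=> [h|/existsP[z /andP[xz zw]]].
  by rewrite IH ?h // ltnW.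
have xA : x \in A.
  apply: (HA m.+1) => //; exact: (within_step xz).
have zA : x \in A by [].
have zA' : z \in A by apply: (HA m) => //; exact: ltnW.
apply/orP; right; apply/existsP; exists (f z).
by rewrite Hadj // xz IH // ltnW.
Qed.

Lemma memadj S (G : config S) (x y : vtx G) : (y \in @adj S G x) = adj x y.
Proof. by []. Qed.

Lemma nbr_perm S (G : config S) (A B : {set vtx G}) f (t s : nat) (a : vtx G) :
  symmetric (@adj S G) ->
  state_iso A B f ->
  (forall m z, m <= t -> within (@adj S G) m z a -> z \in A) ->
  (forall m z, m <= t -> within (@adj S G) m z (f a) -> z \in B) ->
  s < t -> forall x, within (@adj S G) s x a ->
  perm_eq (enum (@adj S G (f x))) (map f (enum (@adj S G x))).
Proof.
move=> Hsym [Hmap Hinj Hsurj Hadj Hst] HA HB Hs x Hx.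
have xA : x \in A by apply: (HA s) => //; exact: ltnW.
have nA : forall z, adj x z -> z \in A.
  move=> z xz; apply: (HA s.+1) => //; apply: (within_step _ Hx); by rewrite Hsym.
apply: uniq_perm.
- exact: enum_uniq.
- rewrite map_inj_in_uniq ?enum_uniq //.
  move=> y z; rewrite !mem_enum !memadj => /nA yA /nA zA; exact: Hinj.
move=> y; rewrite mem_enum memadj; apply/idP/mapP.
- move=> fxy.
  have fxw := iso_within HA (erefl (f a)) Hadj (ltnW Hs) Hx.
  have yB : y \in B.
    apply: (HB s.+1) => //; apply: (within_step _ fxw); by rewrite Hsym.
  have [z zA fz] := Hsurj y yB.
  exists z => //; rewrite mem_enum; move: fxy; rewrite -fz !memadj Hadj //.
- move=> [z]; rewrite mem_enum memadj => xz ->; rewrite Hadj //; exact: nA.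
Qed.

Lemma perm_swap_nbr (T : finType) (R : eqType) (P Q : pred T) (x0 y0 : T) (f : T -> R) :
  (forall y, P y = (Q y && (y != x0)) || (y == y0)) -> Q x0 -> ~~ Q y0 -> f x0 = f y0 ->
  perm_eq (map f (enum P)) (map f (enum Q)).
Proof.
move=> HP Qx Qy fxy.
have u := enum_uniq Q.
have h1 : perm_eq (enum P) (y0 :: rem x0 (enum Q)).
  apply: uniq_perm; first exact: enum_uniq.
    rewrite /= rem_uniq // andbT (mem_rem_uniq _ u) inE mem_enum.
    by apply/negP => /andP[_ h]; exact: (negP Qy h).
  move=> y; rewrite mem_enum inE (mem_rem_uniq _ u) inE mem_enum.
  rewrite -[y \in P]/(P y) -[y \in Q]/(Q y) HP.
  by rewrite orbC andbC.
apply: (perm_trans (perm_map f h1)).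
rewrite /= -fxy perm_sym; apply: (perm_map f (perm_to_rem _)).
by rewrite mem_enum.
Qed.

Lemma claimB S (G : config S) t (e1 ei ej : vtx G * vtx G) (si sj : vtx G -> vtx G)
    (ver : verifier S) (L : vtx G -> bitseq) :
  symmetric (@adj S G) ->
  state_iso (nbhd t e1) (nbhd t ei) si -> (forall b, si (pt b e1) = pt b ei) ->
  state_iso (nbhd t e1) (nbhd t ej) sj -> (forall b, sj (pt b e1) = pt b ej) ->
  {in nbhd t e1, forall x, L (si x) = L (sj x)} ->
  forall k b x, k <= t -> within (@adj S G) (t - k) x (pt b e1) ->
    run ver L k (si x) = run ver L k (sj x).
Proof.
move=> Hsym Hi Hpi Hj Hpj HL.
elim=> [|k IH] b x Hk Hx.
  have xA : x \in nbhd t e1 := nbhd_in (leq_subr 0 t) Hx.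
  case: Hi => [_ _ _ _ Hsti]; case: Hj => [_ _ _ _ Hstj].
  by rewrite /= Hsti // Hstj // HL.
have eq : t - k = (t - k.+1).+1 by lia.
have Hx' : within (@adj S G) (t - k) x (pt b e1) by rewrite eq; exact: withinS.
rewrite /= (IH b x (ltnW Hk) Hx').
apply: vstep_perm.
have HA : forall m z, m <= t -> within (@adj S G) m z (pt b e1) -> z \in nbhd t e1.
  by move=> m z; exact: nbhd_in.
have Hst : t - k.+1 < t by lia.
have P1 := nbr_perm Hsym Hi HA (fun m z hm => ltac:(rewrite Hpi; exact: nbhd_in hm)) Hst Hx.
have P2 := nbr_perm Hsym Hj HA (fun m z hm => ltac:(rewrite Hpj; exact: nbhd_in hm)) Hst Hx.
apply: (perm_trans (perm_map _ P1)); rewrite -map_comp.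
have -> : map (run ver L k \o si) (enum (@adj S G x)) = map (run ver L k \o sj) (enum (@adj S G x)).
  apply/eq_in_map => z; rewrite mem_enum memadj => xz /=.
  apply: (IH b) => //; first exact: ltnW.
  rewrite eq; apply: (within_step _ Hx); by rewrite Hsym.
by rewrite map_comp perm_sym; apply: perm_map.
Qed.

Lemma claimD S (G : config S) (x0 : vtx G) (ver : verifier S) (L : vtx G -> bitseq) :
  forall k (a : vtx (component x0)),
    run ver (fun a : vtx (component x0) => L (val a)) k a = run ver L k (val a).
Proof.
elim=> [|k IH] a //=.
rewrite (eq_map IH) IH; apply: vstep_perm.
rewrite (map_comp (run ver L k) val); apply: perm_map.
apply: uniq_perm; first by rewrite map_inj_uniq ?enum_uniq //; exact: val_inj.
  exact: enum_uniq.
move=> y; rewrite mem_enum memadj; apply/mapP/idP.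
  by move=> [b]; rewrite mem_enum => h ->.
move=> h.
have yC : y \in [set y | connect (@adj S G) x0 y].
  have := valP a; rewrite !inE => ha.
  apply: (connect_trans ha); exact: connect1.
by exists (exist _ y yC); rewrite ?mem_enum.
Qed.

Lemma claimA S (G : config S) t (ei ej : vtx G * vtx G) (ver : verifier S) (L : vtx G -> bitseq) :
  simple_graph G ->
  adj (Tl ei) (Hd ei) -> adj (Tl ej) (Hd ej) ->
  [disjoint nbhd t ei & nbhd t ej] ->
  (forall k, k < t -> run ver L k (Hd ei) = run ver L k (Hd ej)) ->
  (forall k, k < t -> run ver L k (Tl ei) = run ver L k (Tl ej)) ->
  forall k, k <= t -> forall x, run ver (G := cross ei ej) L k x = run ver L k x.
Proof.
move: ei ej => [ti hi] [tj hj] [Hsym Hirr] Ai Aj Hdis HH HT.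
rewrite /Tl /Hd /= in Ai Aj HH HT.
have inI : forall w, within (@adj S G) t w ti || within (@adj S G) t w hi -> w \in nbhd t (ti, hi).
  by move=> w; rewrite inE.
have inJ : forall w, within (@adj S G) t w tj || within (@adj S G) t w hj -> w \in nbhd t (tj, hj).
  by move=> w; rewrite inE.
have tiI : ti \in nbhd t (ti, hi) by apply: inI; rewrite within_refl.
have hiI : hi \in nbhd t (ti, hi) by apply: inI; rewrite within_refl orbT.
have tjJ : tj \in nbhd t (tj, hj) by apply: inJ; rewrite within_refl.
have hjJ : hj \in nbhd t (tj, hj) by apply: inJ; rewrite within_refl orbT.
have nIJ : forall w, w \in nbhd t (ti, hi) -> w \in nbhd t (tj, hj) -> False.
  by move=> w h1; rewrite (disjointFr Hdis h1).
have neq : forall u v, u \in nbhd t (ti, hi) -> v \in nbhd t (tj, hj) -> (u == v) = false.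
  by move=> u v hu hv; apply/eqP => euv; subst; exact: nIJ hu hv.
have titj := neq _ _ tiI tjJ. have tihj := neq _ _ tiI hjJ.
have hitj := neq _ _ hiI tjJ. have hihj := neq _ _ hiI hjJ.
have tihi : (ti == hi) = false by apply/eqP => e; move: Ai; rewrite e Hirr.
have tjhj : (tj == hj) = false by apply/eqP => e; move: Aj; rewrite e Hirr.
elim=> [|k IH] Hk x //=.
have t1 : 1 <= t by lia.
have nbI : forall u v, (u == ti) || (u == hi) -> adj u v -> v \in nbhd t (ti, hi).
  move=> u v hu uv; apply: inI.
  have w1 : forall p, u = p -> within (@adj S G) t v p.
    move=> p e; subst; apply: (within_mono t1); apply: (within_step (z:=p)).
      by rewrite Hsym.
    exact: within_refl.
  by case/orP: hu => /eqP /w1 ->; rewrite ?orbT.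
have nbJ : forall u v, (u == tj) || (u == hj) -> adj u v -> v \in nbhd t (tj, hj).
  move=> u v hu uv; apply: inJ.
  have w1 : forall p, u = p -> within (@adj S G) t v p.
    move=> p e; subst; apply: (within_mono t1); apply: (within_step (z:=p)).
      by rewrite Hsym.
    exact: within_refl.
  by case/orP: hu => /eqP /w1 ->; rewrite ?orbT.
have n1 : ~~ adj ti hj by apply/negP => /(nbI ti hj); rewrite eqxx => /(_ isT) h; exact: nIJ h hjJ.
have n2 : ~~ adj hi tj by apply/negP => /(nbI hi tj); rewrite eqxx orbT => /(_ isT) h; exact: nIJ h tjJ.
have n3 : ~~ adj tj hi by rewrite Hsym.
have n4 : ~~ adj hj ti by rewrite Hsym.
have s1 := esym (etrans (eq_sym _ _) titj). have s2 := esym (etrans (eq_sym _ _) tihj).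
have s3 := esym (etrans (eq_sym _ _) hitj). have s4 := esym (etrans (eq_sym _ _) hihj).
have s5 := esym (etrans (eq_sym _ _) tihi). have s6 := esym (etrans (eq_sym _ _) tjhj).
rewrite (eq_map (IH (ltnW Hk))) IH ?(ltnW Hk) //; apply: vstep_perm.
have Hk' : k < t by [].
have [->|xti] := eqVneq x ti.
  apply: (perm_swap_nbr (x0 := hi) (y0 := hj)) => //; last exact: HH.
  move=> y; rewrite /= /cross_adj /same_edge /Tl /Hd /= ?eqxx ?titj ?tihj ?hitj ?hihj ?tihi ?tjhj /=.
  by rewrite ?andbT ?orbF ?andbF ?orFb.
have [->|xhi] := eqVneq x hi.
  apply: (perm_swap_nbr (x0 := ti) (y0 := tj)) => //; last exact: HT.
    move=> y; rewrite /= /cross_adj /same_edge /Tl /Hd /= ?eqxx -?s1 -?s2 -?s3 -?s4 -?s5 -?s6 ?titj ?tihj ?hitj ?hihj ?tihi ?tjhj /=.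
    by rewrite ?andbT ?orbF ?andbF ?orFb.
  by rewrite Hsym.
have [->|xtj] := eqVneq x tj.
  apply: (perm_swap_nbr (x0 := hj) (y0 := hi)) => //; last by rewrite HH.
  move=> y; rewrite /= /cross_adj /same_edge /Tl /Hd /= ?eqxx -?s1 -?s2 -?s3 -?s4 -?s5 -?s6 ?titj ?tihj ?hitj ?hihj ?tihi ?tjhj /=.
  by rewrite ?andbT ?orbF ?andbF ?orFb.
have [->|xhj] := eqVneq x hj.
  apply: (perm_swap_nbr (x0 := tj) (y0 := ti)) => //; last by rewrite HT.
    move=> y; rewrite /= /cross_adj /same_edge /Tl /Hd /= ?eqxx -?s1 -?s2 -?s3 -?s4 -?s5 -?s6 ?titj ?tihj ?hitj ?hihj ?tihi ?tjhj /=.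
    by rewrite ?andbT ?orbF ?andbF ?orFb.
  by rewrite Hsym.
have -> : enum (@adj S (cross (ti, hi) (tj, hj)) x) = enum (@adj S G x).
  apply: eq_enum => y; rewrite !memadj /= /cross_adj /same_edge /Tl /Hd /=.
  by rewrite memadj (negbTE xti) (negbTE xhi) (negbTE xtj) (negbTE xhj) /= !andbT orbF.
exact: perm_refl.
Qed.

Theorem theorem2 :
  exists c : nat, 0 < c /\
  forall (S : Type) (F : config S -> Prop) (P : config S -> bool) (t : nat)
    (Gs : config S) (r q : nat) (e : nat -> vtx Gs * vtx Gs)
    (sigma : nat -> vtx Gs -> vtx Gs),
    F Gs -> P Gs = true ->
    simple_graph Gs ->
    (forall i, 1 <= i <= r -> adj (Tl (e i)) (Hd (e i))) ->
    (forall i j, 1 <= i <= r -> 1 <= j <= r -> i != j ->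
       [disjoint nbhd t (e i) & nbhd t (e j)]) ->
    (forall i, 1 <= i <= r -> #|nbhd t (e i)| = q) ->
    (forall i, 1 <= i <= r ->
       [/\ state_iso (nbhd t (e 1)) (nbhd t (e i)) (sigma i),
           sigma i (Hd (e 1)) = Hd (e i) &
           sigma i (Tl (e 1)) = Tl (e i)]) ->
    (forall i j, 1 <= i <= r -> 1 <= j <= r -> i != j ->
       exists x : vtx (cross (e i) (e j)),
         F (component x) /\ P (component x) = false) ->
    forall (prv : prover S) (ver : verifier S),
      is_PLS F P t prv ver ->
      forall l : nat, label_size_le F P prv l ->
      r <= 2 ^ (c * q * l).
Proof.
exists 2; split => //.
move=> S F P t Gs r q e sigma FG PG Hsimp Hadj Hdis Hq Hiso Hcross prv ver [Hcomp Hsound] l Hl.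
have [->|rpos] := posnP r; first by [].
have [Hsym _] := Hsimp.
set L := prv Gs.
have acc := Hcomp Gs FG PG.
have Hsz := Hl Gs FG PG.
have key : forall i j, 1 <= i <= r -> 1 <= j <= r ->
   {in nbhd t (e 1), forall x, L (sigma i x) = L (sigma j x)} -> i = j.
  move=> i j Hi Hj HL; case: (eqVneq i j) => // nij; exfalso.
  have [x [Fx Px]] := Hcross i j Hi Hj nij.
  apply: (Hsound _ Fx Px (fun a => L (val a))) => a.
  rewrite claimD.
  have [Ii Hdi Tli] := Hiso i Hi. have [Ij Hdj Tlj] := Hiso j Hj.
  have Hpi : forall b, sigma i (pt b (e 1)) = pt b (e i) by case.
  have Hpj : forall b, sigma j (pt b (e 1)) = pt b (e j) by case.
  have hB := fun k b x => @claimB S Gs t (e 1) (e i) (e j) (sigma i) (sigma j) ver L Hsym Ii Hpi Ij Hpj HL k b x.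
  rewrite (claimA (t:=t) Hsimp (Hadj i Hi) (Hadj j Hj) (Hdis i j Hi Hj nij)) //.
  - move=> k hk; rewrite -Hdi -Hdj; apply: (hB k false) => //; [exact: ltnW | exact: within_refl].
  - move=> k hk; rewrite -Tli -Tlj; apply: (hB k true) => //; [exact: ltnW | exact: within_refl].
set M := 2 ^ (2 * l).
have M0 : 0 < M by rewrite expn_gt0.
have q1 : #|nbhd t (e 1)| = q by apply: Hq; lia.
pose pat i := [seq code (L (sigma i x)) | x <- enum (nbhd t (e 1))].
have pat_sz : forall i, size (pat i) = q by move=> i; rewrite size_map -cardE.
have pat_all : forall i, all (fun c => c < M) (pat i).
  move=> i; apply/allP => c /mapP [x _ ->]; exact: code_small (Hsz _).
have encb : forall i : 'I_r, num M (pat i.+1) < M ^ q.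
  move=> i; rewrite -(pat_sz i.+1); exact: num_lt.
pose g := fun i : 'I_r => Ordinal (encb i).
have ginj : injective g.
  move=> i1 i2 /(congr1 val) /= h.
  have hp := num_inj M0 (etrans (pat_sz _) (esym (pat_sz _))) (pat_all _) (pat_all _) h.
  apply: val_inj; apply: succn_inj; apply: key.
  - by rewrite /= ltn_ord.
  - by rewrite /= ltn_ord.
  move=> x xA; apply: code_inj.
  rewrite /pat in hp; move/eq_in_map: hp => /(_ x); rewrite mem_enum; exact.
have := @leq_card _ _ g ginj; rewrite !card_ord /M -expnM.
by rewrite mulnAC.
Qed.
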